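(* Let $G$ be a simple graph with $m$ edges and girth $g(G)\ge 5$. For an edge $uv$ write $G_{uv}=G-\{u,v\}$. Then the number $p(G;5)$ of $5$-matchings of $G$ equals $\frac15$ times \begin{align*} &\frac{1}{24}m(m^4+10m^3+43m^2+54m-328)+\frac54 M_1(G)^2-\frac12\alpha(G)(m-7)-\frac56\alpha_2(G)\\ &-\frac1{12}M_1(G)(2m^3+30m^2+61m-225)+\frac12\beta(G)+\frac1{12}M_2(G)(6m^2+66m-239)\\ &+\frac1{24}F(G)(6m^2+24m-149)+\frac1{12}M_1^4(G)(m+10)+\frac14 M_2^2(G)-EM_2(G)-\frac5{24}M_1^5(G)\\ &+\frac18\sum_{uv\in E(G)}M_1(G_{uv})^2+\frac13\sum_{uv\in E(G)}m(G_{uv})F(G_{uv})-\frac14\sum_{uv\in E(G)}m(G_{uv})^2M_1(G_{uv})\\ &-\sum_{uv\in E(G)}EM_2(G_{uv})+\sum_{uv\in E(G)}m(G_{uv})M_2(G_{uv}), \end{align*} where $M_1(\cdot)^2$ and $m(\cdot)^2$ denote squares of numbers.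
   Context: All graphs are finite, simple and undirected. A $k$-matching is a set of $k$ pairwise vertex-disjoint edges; $p(G;k)$ is the number of $k$-matchings. $m(H)$ is the number of edges of $H$; $G-\{u,v\}$ is obtained by deleting vertices $u,v$. $d_G(v)$ is the degree of $v$; the girth is the length of a shortest cycle. $M_1^\alpha(G)=\sum_v d_G(v)^\alpha$ (exponent on degrees), $M_1=M_1^2$, $F=M_1^3$; $M_2(G)=\sum_{uv\in E(G)}d_G(u)d_G(v)$; $M_2^2(G)=\sum_{uv\in E(G)}d_G(u)^2d_G(v)^2$; $\alpha_\lambda(G)=\sum_{uv\in E(G)}d_G(u)d_G(v)[d_G(u)^\lambda+d_G(v)^\lambda]$, $\alpha=\alpha_1$. For an edge $e=uv$, $d_G(e)=d_G(u)+d_G(v)-2$; $e\sim f$ means distinct edges sharing a vertex, $e\cap f$ is that vertex, and sums over $e\sim f$ are over unordered pairs; $EM_2(G)=\sum_{e\sim f}d_G(e)d_G(f)$; $\beta(G)=\sum_{e\sim f}d_G(e\cap f)(d_G(e)+d_G(f))$. *)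

(* Defs.v *)
(* All invariants are defined for the induced
   subgraph G[V] on a vertex set V : {set T}; G itself is V = [set: T], and
   G - {u,v} is V = ~: [set u; v]. *)
From mathcomp Require Import all_boot all_order all_algebra.
Set Implicit Arguments. Unset Strict Implicit. Unset Printing Implicit Defensive.
Import Order.TTheory GRing.Theory Num.Theory.
Local Open Scope ring_scope.

Section GraphDefs.
Variables (T : finType) (e : rel T).

Definition simple_graph := symmetric e /\ irreflexive e.

Definition girth_ge5 := forall s : seq T,
  (3 <= size s)%N -> uniq s -> cycle e s -> (5 <= size s)%N.

Variable V : {set T}.

Definition deg (x : T) : nat := #|[set y in V | e x y]|.

Definition edges : {set {set T}} :=
  [set [set x.1; x.2] | x : T * T & [&& x.1 \in V, x.2 \in V & e x.1 x.2]].

Definition nedges : nat := #|edges|.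

Definition degR (x : T) : rat := (deg x)%:R.

Definition M1pow (a : nat) : rat := \sum_(x in V) degR x ^+ a.
Definition M1 : rat := M1pow 2.
Definition Fidx : rat := M1pow 3.

Definition M2 : rat := \sum_(E in edges) \prod_(x in E) degR x.
Definition M22 : rat := \sum_(E in edges) \prod_(x in E) degR x ^+ 2.
Definition alpha_l (l : nat) : rat :=
  \sum_(E in edges) (\prod_(x in E) degR x) * (\sum_(x in E) degR x ^+ l).

Definition edeg (E : {set T}) : rat := \sum_(x in E) degR x - 2.

Definition adjpairs : {set {set {set T}}} :=
  [set P : {set {set T}} | [&& P \subset edges, #|P| == 2%N
                             & \bigcap_(E in P) E != set0]].

Definition EM2 : rat := \sum_(P in adjpairs) \prod_(E in P) edeg E.
Definition betaidx : rat :=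
  \sum_(P in adjpairs) (\sum_(x in \bigcap_(E in P) E) degR x) *
                       (\sum_(E in P) edeg E).

Definition nmatch (k : nat) : nat :=
  #|[set M : {set {set T}} | [&& M \subset edges, #|M| == k & trivIset M]]|.

End GraphDefs.

(* Main.v *)
Require Import Defs.
From mathcomp Require Import all_boot all_order all_algebra.
From mathcomp Require Import ring lra zify.
Import Order.TTheory GRing.Theory Num.Theory.
Local Open Scope ring_scope.
Set Implicit Arguments. Unset Strict Implicit. Unset Printing Implicit Defensive.


Section Infra.
Variables (T : finType) (e : rel T).
Hypothesis esym : symmetric e.
Hypothesis eirr : irreflexive e.

Definition adj (x y : T) : rat := (e x y)%:R.
Local Notation a := adj.

Lemma aC x y : a x y = a y x.
Proof. by rewrite /adj esym. Qed.
Lemma axx x : a x x = 0.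
Proof. by rewrite /adj eirr. Qed.
Lemma aa x y : a x y * a x y = a x y.
Proof. by rewrite /adj; case: (e x y); rewrite ?mulr0 ?mulr1. Qed.

Lemma aE1 x y : e x y -> a x y = 1.
Proof. by rewrite /adj => ->. Qed.

Lemma degRE (V : {set T}) x : degR e V x = \sum_(y in V) a x y.
Proof.
rewrite /degR /deg -sum1_card natr_sum big_mkcond [RHS]big_mkcond.
apply: eq_bigr => y _; rewrite inE /adj; case: (y \in V); case: (e x y) => //.
Qed.

Lemma set2_eqP (x y p q : T) : x != y ->
  ([set p; q] == [set x; y]) = ((p == x) && (q == y)) || ((p == y) && (q == x)).
Proof.
move=> xy; apply/idP/idP.
- move/eqP=> E.
  have hx : x \in [set p; q] by rewrite E !inE eqxx.
  have hy : y \in [set p; q] by rewrite E !inE eqxx orbT.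
  move: hx hy; rewrite !inE.
  by case/orP=> /eqP hx; case/orP=> /eqP hy; subst; try (by rewrite eqxx in xy); rewrite !eqxx ?orbT.
- by case/orP=> /andP[/eqP -> /eqP ->] //; rewrite setUC.
Qed.

Definition epairs (V : {set T}) : {set T * T} :=
  [set p : T * T | [&& p.1 \in V, p.2 \in V & e p.1 p.2]].

Lemma edges_imset (V : {set T}) : edges e V = [set [set p.1; p.2] | p in epairs V].
Proof. by apply/setP=> E; rewrite /edges /epairs; apply/imsetP/imsetP=> [[p]|[p]]; rewrite ?inE => H ->; exists p; rewrite ?inE. Qed.

Lemma edge_sum (V : {set T}) (f : {set T} -> rat) :
  \sum_(E in edges e V) f E =
  2^-1 * \sum_(x in V) \sum_(y in V) a x y * f [set x; y].
Proof.
have -> : \sum_(x in V) \sum_(y in V) a x y * f [set x; y] =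
          \sum_(p in epairs V) f [set p.1; p.2].
  rewrite pair_big big_mkcond [RHS]big_mkcond /=; apply: eq_bigr => -[x y] _.
  rewrite /epairs !inE /= /adj; case: (x \in V); case: (y \in V); case: (e x y) => //=;
  by rewrite ?mul1r ?mul0r.
rewrite (partition_big_imset (fun p : T * T => [set p.1; p.2])) -edges_imset.
rewrite mulr_sumr; apply: eq_bigr => E /imsetP [[x y]]; rewrite /epairs inE /= => /and3P [xV yV exy] ->.
have xy : x != y by apply: contraTneq exy => ->; rewrite eirr.
rewrite (eq_bigr (fun _ => f [set x; y])); last by move=> p /andP [_ /eqP ->].
rewrite sumr_const.
have -> : #|[pred i in epairs V | [set i.1; i.2] == [set x; y]]| = 2%N.
  have <- : #|[set (x, y); (y, x)]| = 2%N by rewrite cards2 xpair_eqE (negbTE xy).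
  apply: eq_card => -[p q]; rewrite !inE /= set2_eqP // !xpair_eqE.
  apply/andP/orP.
  - by case=> _; case/orP=> /andP [/eqP -> /eqP ->]; [left|right]; rewrite !eqxx.
  - case=> /andP [/eqP -> /eqP ->]; rewrite ?eqxx ?xV ?yV ?exy //= ?orbT; split => //.
    by rewrite esym.
by rewrite -mulr_natr; field.
Qed.

Lemma sum_set2 (f : T -> rat) x y : x != y -> \sum_(z in [set x; y]) f z = f x + f y.
Proof. by move=> xy; rewrite big_setU1 ?inE // big_set1. Qed.
Lemma prod_set2 (f : T -> rat) x y : x != y -> \prod_(z in [set x; y]) f z = f x * f y.
Proof. by move=> xy; rewrite big_setU1 ?inE // big_set1. Qed.

Lemma sum_rem (V : {set T}) u v (f : T -> rat) : u \in V -> v \in V -> u != v ->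
  \sum_(x in V :\: [set u; v]) f x = \sum_(x in V) f x - f u - f v.
Proof.
move=> uV vV uv; rewrite [in RHS](big_setD1 u uV) (big_setD1 v) /=; last by rewrite !inE eq_sym uv vV.
have -> : V :\ u :\ v = V :\: [set u; v].
  by apply/setP => x; rewrite !inE; case: (x == u); case: (x == v); rewrite ?andbF.
ring.
Qed.

Lemma d_rem (V : {set T}) u v x : u \in V -> v \in V -> u != v ->
  degR e (V :\: [set u; v]) x = degR e V x - a x u - a x v.
Proof. by move=> uV vV uv; rewrite !degRE sum_rem. Qed.

Definition mm (V : {set T}) : rat := (nedges e V)%:R.

Lemma mm_deg (V : {set T}) : mm V = 2^-1 * \sum_(x in V) degR e V x.
Proof.
rewrite /mm /nedges -[#|_|%:R]mulr1n -sumr_const edge_sum; congr (_ * _).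
by apply: eq_bigr => x _; rewrite degRE; apply: eq_bigr => y _; rewrite mulr1.
Qed.

Lemma sum_adj (V : {set T}) u : u \in V -> \sum_(x in V) a x u = degR e V u.
Proof. by move=> _; rewrite degRE; apply: eq_bigr => x _; rewrite aC. Qed.

Lemma mm_loc (V : {set T}) u v : u \in V -> v \in V -> e u v ->
  mm (V :\: [set u; v]) = mm V - degR e V u - degR e V v + 1.
Proof.
move=> uV vV euv; have uv : u != v by apply: contraTneq euv => ->; rewrite eirr.
rewrite !mm_deg (eq_bigr (fun x => degR e V x - a x u - a x v)); last by move=> x _; rewrite d_rem.
rewrite sum_rem // !sumrB !sum_adj // !axx (aC v u) aE1 //.
by field.
Qed.

Definition Phi (V : {set T}) (G : T -> T -> rat) := \sum_(u in V) \sum_(v in V) a u v * G u v.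
Definition Tn (V : {set T}) j u := \sum_(x in V) a u x * degR e V x ^+ j.
Definition U (V : {set T}) u := \sum_(x in V) a u x * Tn V 1 x.
Definition A (V : {set T}) i j := Phi V (fun u v => degR e V u ^+ i * degR e V v ^+ j).
Definition Q (V : {set T}) := Phi V (fun u v => Tn V 1 u * degR e V v).

Lemma Phi_add (V : {set T}) F G : Phi V (fun u v => F u v + G u v) = Phi V F + Phi V G.
Proof. by rewrite /Phi -big_split; apply: eq_bigr => u _; rewrite -big_split; apply: eq_bigr => v _; rewrite mulrDr. Qed.
Lemma Phi_scale (V : {set T}) c F : Phi V (fun u v => c * F u v) = c * Phi V F.
Proof. rewrite /Phi mulr_sumr; apply: eq_bigr => u _; rewrite mulr_sumr; apply: eq_bigr => v _; by rewrite mulrCA. Qed.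
Lemma Phi_sym (V : {set T}) F : Phi V F = Phi V (fun u v => F v u).
Proof. rewrite /Phi exchange_big; apply: eq_bigr => u _; apply: eq_bigr => v _; by rewrite aC. Qed.
Lemma Phi_ext (V : {set T}) F G : (forall u v, u \in V -> v \in V -> e u v -> F u v = G u v) -> Phi V F = Phi V G.
Proof.
move=> h; apply: eq_bigr => u uV; apply: eq_bigr => v vV; rewrite /adj.
by case E: (e u v); rewrite ?mul0r // h.
Qed.

Lemma inner_d (V : {set T}) u (c : rat) : \sum_(v in V) a u v * c = degR e V u * c.
Proof. by rewrite -mulr_suml degRE. Qed.

Lemma PhiT (V : {set T}) j : Phi V (fun u v => Tn V j u) = A V 1 j.
Proof.
rewrite /A /Phi; apply: eq_bigr => u _; rewrite inner_d /Tn mulr_sumr.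
by apply: eq_bigr => v _; rewrite expr1 mulrCA.
Qed.
Lemma PhiDS (V : {set T}) : Phi V (fun u v => degR e V u * Tn V 1 u) = A V 2 1.
Proof.
rewrite /A /Phi; apply: eq_bigr => u _; rewrite inner_d /Tn !mulr_sumr.
by apply: eq_bigr => v _; ring.
Qed.
Lemma PhiU (V : {set T}) : Phi V (fun u v => U V u) = Q V.
Proof.
rewrite /Q /Phi /U (eq_bigr (fun u => \sum_(x in V) a u x * (degR e V u * Tn V 1 x))); last first.
  by move=> u _; rewrite inner_d mulr_sumr; apply: eq_bigr => x _; rewrite mulrCA.
rewrite exchange_big; apply: eq_bigr => x _; apply: eq_bigr => u _; rewrite aC; ring.
Qed.
Lemma A_sym (V : {set T}) i j : A V i j = A V j i.
Proof. by rewrite /A Phi_sym /Phi; apply: eq_bigr => u _; apply: eq_bigr => v _; rewrite [_ ^+ i * _]mulrC. Qed.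
Lemma P_A (V : {set T}) k : M1pow e V k.+1 = A V k 0.
Proof.
rewrite /M1pow /A /Phi; apply: eq_bigr => u _.
rewrite (eq_bigr (fun v => a u v * degR e V u ^+ k)); last by move=> v _; rewrite expr0 mulr1.
by rewrite inner_d exprS.
Qed.
Lemma mm_A (V : {set T}) : mm V = 2^-1 * A V 0 0.
Proof.
rewrite mm_deg /A /Phi; congr (_ * _); apply: eq_bigr => u _.
rewrite (eq_bigr (fun v => a u v * 1)); last by move=> v _; rewrite !expr0 mulr1.
by rewrite inner_d mulr1.
Qed.

Lemma edge_sum_sym (V : {set T}) (F : {set T} -> rat) (H : T -> T -> rat) :
  (forall u v, u \in V -> v \in V -> e u v -> 2 * F [set u; v] = H u v + H v u) ->
  \sum_(E in edges e V) F E = 2^-1 * Phi V H.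
Proof.
move=> h; rewrite edge_sum; congr (_ * _).
have h2 : 2 * Phi V (fun u v => F [set u; v]) = Phi V H + Phi V H.
  by rewrite -Phi_scale {2}[Phi V H]Phi_sym -Phi_add; apply: Phi_ext.
rewrite -/(Phi V (fun u v => F [set u; v])).
apply: (mulfI (_ : (2:rat) != 0)) => //; rewrite h2; ring.
Qed.
End Infra.

Local Close Scope ring_scope.

Section Match.
Variables (T : finType) (e : rel T).
Hypothesis esym : symmetric e.
Hypothesis eirr : irreflexive e.

Lemma edgesP (W : {set T}) E : reflect (exists x y, [/\ x \in W, y \in W, e x y & E = [set x; y]]) (E \in edges e W).
Proof.
apply: (iffP imsetP).
- by case=> -[x y]; rewrite inE /= => /and3P [? ? ?] ->; exists x, y.
- by case=> x [y] [? ? ? ->]; exists (x, y); rewrite // inE /= ; apply/and3P.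
Qed.

Lemma edges_sub (W : {set T}) E : E \in edges e W -> E \subset W.
Proof. by case/edgesP=> x [y] [xW yW _ ->]; apply/subsetP=> z; rewrite !inE => /orP [] /eqP ->. Qed.

Lemma edges_n0 (W : {set T}) E : E \in edges e W -> E != set0.
Proof. by case/edgesP=> x [y] [_ _ _ ->]; apply/set0Pn; exists x; rewrite !inE eqxx. Qed.

Lemma edges_mono (W V : {set T}) : W \subset V -> edges e W \subset edges e V.
Proof.
move=> /subsetP WV; apply/subsetP=> E /edgesP [x [y [xW yW exy ->]]].
by apply/edgesP; exists x, y; split; rewrite ?WV.
Qed.

Lemma edges_rem (V E E' : {set T}) : E' \in edges e V -> [disjoint E' & E] -> E' \in edges e (V :\: E).
Proof.
case/edgesP=> x [y [xV yV exy ->]] dis; apply/edgesP; exists x, y; split => //.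
- by rewrite inE xV andbT; apply/negbT/(disjointFr dis); rewrite !inE eqxx.
- by rewrite inE yV andbT; apply/negbT/(disjointFr dis); rewrite !inE eqxx orbT.
Qed.

Lemma edges_rem_dis (V E E' : {set T}) : E' \in edges e (V :\: E) -> [disjoint E' & E].
Proof.
move/edges_sub=> /subsetP sub; rewrite disjoint_subset; apply/subsetP=> z /sub.
by rewrite !inE => /andP [].
Qed.

Definition Mk V k := [set M : {set {set T}} | [&& M \subset edges e V, #|M| == k & trivIset M]].

Lemma nmatchE V k : nmatch e V k = #|Mk V k|.
Proof. by []. Qed.

Lemma card_fiber V k E : E \in edges e V ->
  #|[set M in Mk V k.+1 | E \in M]| = #|Mk (V :\: E) k|.
Proof.
move=> EV.
have EnW : E \notin edges e (V :\: E).
  apply/negP=> /edges_rem_dis; rewrite -setI_eq0 setIid; apply/negP; exact: edges_n0 EV.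
have -> : [set M in Mk V k.+1 | E \in M] = [set E |: M' | M' in Mk (V :\: E) k].
  apply/setP=> M; rewrite !inE; apply/idP/imsetP.
  - case/andP=> /and3P [sub /eqP cM triv] EM; exists (M :\ E); last by rewrite setD1K.
    rewrite inE; apply/and3P; split.
    + apply/subsetP=> E' /setD1P [nE E'M]; apply: edges_rem; first by apply: (subsetP sub).
      by apply: (trivIsetP triv).
    + by move: cM; rewrite (cardsD1 E) EM add1n => -[->].
    + by apply: trivIsetS triv; apply: subD1set.
  - case=> M' /[!inE] /and3P [sub /eqP cM triv] ->; rewrite setU11 andbT.
    have EM' : E \notin M' by apply: contra EnW; apply: (subsetP sub).
    apply/and3P; split.
    + rewrite subUset sub1set EV /=; apply: subset_trans sub _; apply: edges_mono; exact: subsetDl.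
    + by rewrite cardsU1 EM' cM.
    + have h1 : {in M', forall B : {set T}, [disjoint E & B]}.
        by move=> B /(subsetP sub) /edges_rem_dis; rewrite disjoint_sym.
      have h2 : set0 \notin M' by apply/negP=> /(subsetP sub) /edges_n0; rewrite eqxx.
      by case: (trivIsetU1 h1 triv h2).
apply: card_in_imset => M1 M2; rewrite !inE => /and3P [s1 _ _] /and3P [s2 _ _] eq12.
have E1 : E \notin M1 by apply: contra EnW; apply: (subsetP s1).
have E2 : E \notin M2 by apply: contra EnW; apply: (subsetP s2).
by rewrite -(setU1K E1) -(setU1K E2) eq12.
Qed.

Lemma nmatch_rec V k : (k.+1 * nmatch e V k.+1 = \sum_(E in edges e V) nmatch e (V :\: E) k)%N.
Proof.
rewrite nmatchE.
have -> : (k.+1 * #|Mk V k.+1| = \sum_(M in Mk V k.+1) #|M|)%N.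
  rewrite mulnC -sum_nat_const; apply: eq_bigr => M; rewrite inE => /and3P [_ /eqP -> _] //.
have -> : \sum_(M in Mk V k.+1) #|M| = \sum_(M in Mk V k.+1) \sum_(E in edges e V) (E \in M : nat).
  apply: eq_bigr => M; rewrite inE => /and3P [sub _ _].
  rewrite -big_mkcondr /= sum1_card; apply: eq_card => E; 
  by case EM: (E \in M); symmetry; [apply/andP; split; [exact: (subsetP sub)|] | apply/negbTE; apply/negP => /andP [_]; rewrite EM].
rewrite exchange_big; apply: eq_bigr => E EV; rewrite nmatchE -card_fiber //.
rewrite -big_mkcondr /= sum1_card; apply: eq_card => M; by rewrite [RHS]inE.
Qed.
End Match.

Local Open Scope ring_scope.


Section Loc.
Variables (T : finType) (e : rel T).
Hypothesis esym : symmetric e.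
Hypothesis eirr : irreflexive e.
Hypothesis tri : forall x u v, e u v -> e x u -> e x v -> False.
Hypothesis sq : forall u v x y, e u v -> e u x -> e x y -> e y v -> x != v -> y != u -> False.

Local Notation a := (adj e).
Local Notation d V := (degR e V).

Lemma pow_loc k (t : rat) x u v : e u v ->
  (t - a x u - a x v) ^+ k = t ^+ k + ((t - 1) ^+ k - t ^+ k) * (a x u + a x v).
Proof.
move=> euv; rewrite /adj; case eu: (e x u); case ev: (e x v) => /=.
- by case: (tri euv eu ev).
all: rewrite /= ?mulr1n ?mulr0n ?subr0; move: ((t - 1) ^+ k) (t ^+ k) => y z; ring.
Qed.

Lemma sum_poly_loc (V : {set T}) u (c0 c1 c2 c3 : rat) :
  \sum_(x in V) a u x * (c3 * d V x ^+ 3 + c2 * d V x ^+ 2 + c1 * d V x + c0) =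
  c3 * Tn e V 3 u + c2 * Tn e V 2 u + c1 * Tn e V 1 u + c0 * d V u.
Proof.
rewrite /Tn degRE !mulr_sumr -!big_split /=; apply: eq_bigr => x _; ring.
Qed.

Lemma P_loc (V : {set T}) u v k : u \in V -> v \in V -> e u v ->
  M1pow e (V :\: [set u; v]) k = M1pow e V k
   + (\sum_(x in V) a u x * ((d V x - 1) ^+ k - d V x ^+ k)
   + \sum_(x in V) a v x * ((d V x - 1) ^+ k - d V x ^+ k))
   - (d V u - 1) ^+ k - (d V v - 1) ^+ k.
Proof.
move=> uV vV euv; have uv : u != v by apply: contraTneq euv => ->; rewrite eirr.
rewrite /M1pow (eq_bigr (fun x => (d V x - a x u - a x v) ^+ k)); last by move=> x _; rewrite d_rem.
rewrite sum_rem // !(axx eirr) (aC esym v u) (aE1 euv) !subr0.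
rewrite (eq_bigr (fun x => d V x ^+ k + ((d V x - 1) ^+ k - d V x ^+ k) * (a x u + a x v))); last first.
  by move=> x _; rewrite pow_loc.
rewrite big_split /=.
have -> : \sum_(x in V) ((d V x - 1) ^+ k - d V x ^+ k) * (a x u + a x v) =
  \sum_(x in V) a u x * ((d V x - 1) ^+ k - d V x ^+ k) + \sum_(x in V) a v x * ((d V x - 1) ^+ k - d V x ^+ k).
  rewrite -big_split; apply: eq_bigr => x _ /=; rewrite (aC esym u x) (aC esym v x); ring.
by [] || ring.
Qed.

Lemma sum_g (V : {set T}) u k (c0 c1 c2 c3 : rat) :
  (forall t : rat, (t - 1) ^+ k - t ^+ k = c3 * t ^+ 3 + c2 * t ^+ 2 + c1 * t + c0) ->
  \sum_(x in V) a u x * ((d V x - 1) ^+ k - d V x ^+ k) =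
  c3 * Tn e V 3 u + c2 * Tn e V 2 u + c1 * Tn e V 1 u + c0 * d V u.
Proof. by move=> h; rewrite -sum_poly_loc; apply: eq_bigr => x _; rewrite h. Qed.

Lemma P2_loc (V : {set T}) u v : u \in V -> v \in V -> e u v ->
  M1pow e (V :\: [set u; v]) 2 = M1pow e V 2 - 2 * (Tn e V 1 u + Tn e V 1 v) + (d V u + d V v)
   - (d V u - 1) ^+ 2 - (d V v - 1) ^+ 2.
Proof.
move=> uV vV euv; rewrite P_loc // !(@sum_g V _ 2 1 (-2) 0 0); first ring.
all: by move=> t; ring.
Qed.
Lemma P3_loc (V : {set T}) u v : u \in V -> v \in V -> e u v ->
  M1pow e (V :\: [set u; v]) 3 = M1pow e V 3 - 3 * (Tn e V 2 u + Tn e V 2 v) + 3 * (Tn e V 1 u + Tn e V 1 v)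
   - (d V u + d V v) - (d V u - 1) ^+ 3 - (d V v - 1) ^+ 3.
Proof.
move=> uV vV euv; rewrite P_loc // !(@sum_g V _ 3 (-1) 3 (-3) 0); first ring.
all: by move=> t; ring.
Qed.
Lemma P4_loc (V : {set T}) u v : u \in V -> v \in V -> e u v ->
  M1pow e (V :\: [set u; v]) 4 = M1pow e V 4 - 4 * (Tn e V 3 u + Tn e V 3 v) + 6 * (Tn e V 2 u + Tn e V 2 v)
   - 4 * (Tn e V 1 u + Tn e V 1 v) + (d V u + d V v) - (d V u - 1) ^+ 4 - (d V v - 1) ^+ 4.
Proof.
move=> uV vV euv; rewrite P_loc // !(@sum_g V _ 4 1 (-4) 6 (-4)); first ring.
all: by move=> t; ring.
Qed.

Lemma M2_Phi (V : {set T}) : M2 e V = 2^-1 * Phi e V (fun x y => d V x * d V y).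
Proof.
rewrite /M2 edge_sum //; congr (_ * _); apply: eq_bigr => x _; apply: eq_bigr => y _.
rewrite /adj; case exy: (e x y); rewrite ?mul0r // prod_set2 //.
by apply: contraTneq exy => ->; rewrite eirr.
Qed.

Lemma Phi_rem (V : {set T}) u v G : u \in V -> v \in V -> e u v ->
  Phi e (V :\: [set u; v]) G = Phi e V G - \sum_(y in V) a u y * G u y - \sum_(y in V) a v y * G v y
    - \sum_(x in V) a x u * G x u - \sum_(x in V) a x v * G x v + G u v + G v u.
Proof.
move=> uV vV euv; have uv : u != v by apply: contraTneq euv => ->; rewrite eirr.
rewrite /Phi (eq_bigr (fun x => \sum_(y in V) a x y * G x y - a x u * G x u - a x v * G x v)); last first.
  by move=> x _; rewrite sum_rem.
rewrite sum_rem // !sumrB !(axx eirr) (aC esym v u) (aE1 euv); ring.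
Qed.

Lemma bb0 (V : {set T}) u v x y : u \in V -> v \in V -> e u v ->
  x \in V :\: [set u; v] -> y \in V :\: [set u; v] -> e x y ->
  (a x u + a x v) * (a y u + a y v) = 0.
Proof.
move=> uV vV euv; rewrite !inE => /andP [xuv _] /andP [yuv _] exy.
move: xuv yuv; rewrite !negb_or => /andP [xu xv] /andP [yu yv].
rewrite /adj; case xu': (e x u); case xv': (e x v); case yu': (e y u); case yv': (e y v) => //=.
all: rewrite ?mulr1n ?mulr0n ?addr0 ?add0r ?mulr0 ?mul0r //; exfalso.
all: first [ exact: (tri euv xu' xv') | exact: (tri euv yu' yv')
  | by apply: (tri exy (_ : e u x) (_ : e u y)); rewrite esym
  | by apply: (tri exy (_ : e v x) (_ : e v y)); rewrite esym
  | by apply: (sq euv (_ : e u x) exy (_ : e y v) xv yu); rewrite // esym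
  | by apply: (sq (_ : e v u) (_ : e v x) exy (_ : e y u) xu yv); rewrite // esym ].
Qed.
Lemma evL (V : {set T}) w c : \sum_(y in V) a w y * (c * d V y) = c * Tn e V 1 w.
Proof. by rewrite /Tn mulr_sumr; apply: eq_bigr => y _; rewrite expr1 mulrCA. Qed.
Lemma evR (V : {set T}) w c : \sum_(x in V) a x w * (d V x * c) = c * Tn e V 1 w.
Proof. by rewrite /Tn mulr_sumr; apply: eq_bigr => y _; rewrite expr1 (aC esym y w); ring. Qed.
Lemma evB (V : {set T}) u v c : e u v -> \sum_(x in V) a x u * ((a x u + a x v) * c) = c * d V u.
Proof.
move=> euv; rewrite degRE mulr_sumr; apply: eq_bigr => x _; rewrite (aC esym u x).
rewrite /adj; case xu: (e x u); case xv: (e x v) => //=; rewrite ?mulr1n ?mulr0n; try ring.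
by case: (tri euv xu xv).
Qed.
Lemma evB' (V : {set T}) u v c : e u v -> \sum_(x in V) a x v * ((a x u + a x v) * c) = c * d V v.
Proof.
move=> euv; rewrite degRE mulr_sumr; apply: eq_bigr => x _; rewrite (aC esym v x).
rewrite /adj; case xu: (e x u); case xv: (e x v) => //=; rewrite ?mulr1n ?mulr0n; try ring.
by case: (tri euv xu xv).
Qed.
Lemma evU (V : {set T}) u v : Phi e V (fun x y => (a x u + a x v) * d V y) = U e V u + U e V v.
Proof.
rewrite /Phi /U -big_split; apply: eq_bigr => x _ /=.
rewrite (eq_bigr (fun y => (a x u + a x v) * (a x y * d V y ^+ 1))); last by move=> y _; rewrite expr1; ring.
by rewrite -mulr_sumr -/(Tn e V 1 x) (aC esym x u) (aC esym x v); ring.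
Qed.

Lemma M2_loc (V : {set T}) u v : u \in V -> v \in V -> e u v ->
  M2 e (V :\: [set u; v]) = 2^-1 * A e V 1 1 - d V u * Tn e V 1 u - d V v * Tn e V 1 v + d V u * d V v
   - U e V u - U e V v + d V u ^+ 2 + d V v ^+ 2 + Tn e V 1 u + Tn e V 1 v - d V u - d V v.
Proof.
move=> uV vV euv; have uv : u != v by apply: contraTneq euv => ->; rewrite eirr.
rewrite M2_Phi.
have s1 : Phi e (V :\: [set u; v]) (fun x y => d V x * (a y u + a y v)) =
          Phi e (V :\: [set u; v]) (fun x y => (a x u + a x v) * d V y).
  by rewrite Phi_sym //; apply: Phi_ext => x y _ _ _; rewrite mulrC.
have e1 : Phi e (V :\: [set u; v]) (fun x y => d (V :\: [set u; v]) x * d (V :\: [set u; v]) y) =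
   Phi e (V :\: [set u; v]) (fun x y => d V x * d V y)
   + (-1) * Phi e (V :\: [set u; v]) (fun x y => (a x u + a x v) * d V y)
   + (-1) * Phi e (V :\: [set u; v]) (fun x y => d V x * (a y u + a y v)).
  rewrite -!Phi_scale -!Phi_add; apply: Phi_ext => x y xW yW exy.
  rewrite !d_rem //; have h := bb0 uV vV euv xW yW exy.
  apply/eqP; rewrite -subr_eq0; apply/eqP; rewrite -h; ring.
rewrite e1 s1 !Phi_rem //= evU !evL !evR (evB _ _ euv) (evB' _ _ euv) !(axx eirr) (aC esym v u) (aE1 euv).
have -> : Phi e V (fun x y => d V x * d V y) = A e V 1 1.
  by rewrite /A; apply: Phi_ext => x y _ _ _; rewrite !expr1.
by field.
Qed.
End Loc.


Section Adj.
Variables (T : finType) (e : rel T).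
Hypothesis esym : symmetric e.
Hypothesis eirr : irreflexive e.
Local Notation a := (adj e).
Local Notation d V := (degR e V).

Definition trip (V : {set T}) : {set (T * T) * T} :=
  [set t | [&& t.1.1 \in V, t.1.2 \in V, t.2 \in V, e t.1.1 t.1.2, e t.1.1 t.2 & t.1.2 != t.2]].
Definition hP (t : (T * T) * T) : {set {set T}} := [set [set t.1.1; t.1.2]; [set t.1.1; t.2]].

Lemma neq_e x y : e x y -> x != y.
Proof. by apply: contraTneq => ->; rewrite eirr. Qed.

Lemma pair_ne (x y z : T) : x != y -> y != z -> [set x; y] != [set x; z].
Proof.
move=> xy yz; apply/negP => /eqP E.
have : y \in [set x; z] by rewrite -E !inE eqxx orbT.
by rewrite !inE (negbTE yz) orbF eq_sym (negbTE xy).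
Qed.

Lemma edge_at (V : {set T}) E w : E \in edges e V -> w \in E ->
  [/\ w \in V & exists y, [/\ y \in V, e w y & E = [set w; y]]].
Proof.
case/edgesP=> p [q [pV qV epq ->]]; rewrite !inE => /orP [] /eqP ->.
- by split => //; exists q.
- by split => //; exists p; rewrite esym setUC.
Qed.

Lemma adjpairs_img (V : {set T}) : adjpairs e V = hP @: trip V.
Proof.
apply/setP => P; apply/idP/imsetP.
- rewrite inE => /and3P [sub /cards2P [E1 [E2 [ne12 PE]]] /set0Pn [w /bigcapP wP]].
  have w1 : w \in E1 by apply: wP; rewrite PE !inE eqxx.
  have w2 : w \in E2 by apply: wP; rewrite PE !inE eqxx orbT.
  have E1e : E1 \in edges e V by apply: (subsetP sub); rewrite PE !inE eqxx.
  have E2e : E2 \in edges e V by apply: (subsetP sub); rewrite PE !inE eqxx orbT.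
  case: (edge_at E1e w1) => wV [y [yV ewy E1y]].
  case: (edge_at E2e w2) => _ [z [zV ewz E2z]].
  exists ((w, y), z); last by rewrite PE E1y E2z.
  rewrite inE /= wV yV zV ewy ewz /=; apply: contra ne12 => /eqP yz.
  by rewrite E1y E2z yz.
- case=> -[[x y] z]; rewrite inE /= => /and5P [xV yV zV exy /andP [exz yz]] ->.
  rewrite inE; apply/and3P; split.
  + apply/subsetP => E; rewrite !inE => /orP [] /eqP ->; apply/edgesP.
    * by exists x, y.
    * by exists x, z.
  + by rewrite cards2 pair_ne // neq_e.
  + apply/set0Pn; exists x; apply/bigcapP => E; rewrite !inE => /orP [] /eqP ->; by rewrite !inE eqxx.
Qed.

Lemma fiber2 (V : {set T}) x y z : ((x, y), z) \in trip V ->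
  #|[pred t in trip V | hP t == hP ((x, y), z)]| = 2%N.
Proof.
rewrite inE /= => /and5P [xV yV zV exy /andP [exz yz]].
have xy := neq_e exy; have xz := neq_e exz.
have <- : #|[set ((x, y), z); ((x, z), y)]| = 2%N.
  by rewrite cards2 !xpair_eqE eqxx /= (negbTE yz).
apply: eq_card => -[[x' y'] z']; rewrite !inE /= !xpair_eqE.
apply/andP/orP.
- case=> /and5P [x'V y'V z'V ex'y' /andP [ex'z' y'z']].
  have x'y' := neq_e ex'y'; have x'z' := neq_e ex'z'.
  have ne0 : [set x; y] != [set x; z] := pair_ne xy yz.
  rewrite /hP /= (set2_eqP _ _ ne0).
  case/orP => /andP [/eqP h1 /eqP h2]; move: h1 h2.
  + move/eqP; rewrite (set2_eqP _ _ xy) => /orP [] /andP [/eqP h3 /eqP h4];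
    move/eqP; rewrite (set2_eqP _ _ xz) => /orP [] /andP [/eqP h5 /eqP h6]; subst;
    rewrite ?eqxx ?orbT //; first [by left | by right | by rewrite ?eqxx in xy xz yz x'y' x'z' y'z'].
  + move/eqP; rewrite (set2_eqP _ _ xz) => /orP [] /andP [/eqP h3 /eqP h4];
    move/eqP; rewrite (set2_eqP _ _ xy) => /orP [] /andP [/eqP h5 /eqP h6]; subst;
    rewrite ?eqxx ?orbT //; first [by left | by right | by rewrite ?eqxx in xy xz yz x'y' x'z' y'z'].
- case=> /andP [/andP [/eqP -> /eqP ->] /eqP ->]; split.
  + by rewrite ?inE /= xV yV zV exy exz yz.
  + by rewrite eqxx.
  + by rewrite ?inE /= xV zV yV exz exy eq_sym yz.
  + by rewrite /hP /= setUC.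
Qed.

Lemma adj_sum (V : {set T}) (f : {set {set T}} -> rat) :
  \sum_(P in adjpairs e V) f P = 2^-1 *
  \sum_(x in V) \sum_(y in V) \sum_(z in V) a x y * a x z * (y != z)%:R * f (hP ((x, y), z)).
Proof.
have -> : \sum_(x in V) \sum_(y in V) \sum_(z in V) a x y * a x z * (y != z)%:R * f (hP ((x, y), z)) =
          \sum_(t in trip V) f (hP t).
  rewrite pair_big /= pair_big /= big_mkcond [RHS]big_mkcond /=; apply: eq_bigr => -[[x y] z] _ /=.
  rewrite /trip inE /= /adj; case: (x \in V); case: (y \in V); case: (z \in V); case: (e x y); case: (e x z); case: (y != z);
  by rewrite /= ?mulr1n ?mulr0n ?mul1r ?mul0r ?mulr0.
rewrite (partition_big_imset hP) -adjpairs_img mulr_sumr; apply: eq_bigr => P; rewrite adjpairs_img => /imsetP [[[x y] z] tV ->].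
rewrite (eq_bigr (fun _ => f (hP ((x, y), z)))); last by move=> t /andP [_ /eqP ->].
by rewrite sumr_const fiber2 // -mulr_natr; field.
Qed.
End Adj.


Section Links.
Variables (T : finType) (e : rel T).
Hypothesis esym : symmetric e.
Hypothesis eirr : irreflexive e.
Local Notation a := (adj e).
Local Notation d V := (degR e V).

Definition Sig (V : {set T}) (g : T -> rat) := \sum_(x in V) g x.
Lemma Sig_add (V : {set T}) F G : Sig V (fun x => F x + G x) = Sig V F + Sig V G.
Proof. by rewrite /Sig big_split. Qed.
Lemma Sig_scale (V : {set T}) c F : Sig V (fun x => c * F x) = c * Sig V F.
Proof. by rewrite /Sig mulr_sumr. Qed.
Lemma Sig_pow (V : {set T}) k : Sig V (fun x => d V x ^+ k.+1) = A e V k 0.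
Proof. by rewrite -P_A. Qed.
Lemma Sig_T (V : {set T}) j : Sig V (fun x => d V x ^+ j * Tn e V 1 x) = A e V j 1.
Proof.
rewrite /Sig /A /Phi; apply: eq_bigr => x _; rewrite /Tn mulr_sumr; apply: eq_bigr => y _; ring.
Qed.
Lemma Sig_T1 (V : {set T}) : Sig V (Tn e V 1) = A e V 0 1.
Proof. by rewrite -(Sig_T V 0); apply: eq_bigr => x _; rewrite mul1r. Qed.
Lemma Sig_T2 (V : {set T}) : Sig V (fun x => Tn e V 2 x) = A e V 0 2.
Proof. rewrite /Sig /A /Phi; apply: eq_bigr => x _; rewrite /Tn; apply: eq_bigr => y _; ring. Qed.
Lemma Sig_Q (V : {set T}) : Sig V (fun x => Tn e V 1 x ^+ 2) = Q e V.
Proof.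
rewrite /Sig /Q /Phi; apply: eq_bigr => x _; rewrite expr2 {2}/Tn mulr_sumr; apply: eq_bigr => y _; ring.
Qed.

Lemma M2_A (V : {set T}) : M2 e V = 2^-1 * A e V 1 1.
Proof.
rewrite /M2 edge_sum //; congr (_ * _); rewrite /A /Phi; apply: eq_bigr => x _; apply: eq_bigr => y _.
rewrite /adj; case exy: (e x y); rewrite ?mul0r // prod_set2 ?expr1 //.
by apply: contraTneq exy => ->; rewrite eirr.
Qed.
Lemma M22_A (V : {set T}) : M22 e V = 2^-1 * A e V 2 2.
Proof.
rewrite /M22 edge_sum //; congr (_ * _); rewrite /A /Phi; apply: eq_bigr => x _; apply: eq_bigr => y _.
rewrite /adj; case exy: (e x y); rewrite ?mul0r // (@prod_set2 _ (fun z => d V z ^+ 2)) //.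
by apply: contraTneq exy => ->; rewrite eirr.
Qed.
Lemma alpha_A (V : {set T}) l : alpha_l e V l = A e V l.+1 1.
Proof.
rewrite /alpha_l edge_sum //.
have -> : \sum_(x in V) \sum_(y in V) a x y * ((\prod_(z in [set x; y]) d V z) * (\sum_(z in [set x; y]) d V z ^+ l)) =
  Phi e V (fun x y => d V x ^+ l.+1 * d V y ^+ 1) + Phi e V (fun x y => d V x ^+ 1 * d V y ^+ l.+1).
  rewrite -Phi_add; apply: Phi_ext => x y _ _ exy.
  have xy : x != y by apply: contraTneq exy => ->; rewrite eirr.
  by rewrite prod_set2 // sum_set2 // !exprS; ring.
rewrite -/(A e V _ _) -/(A e V _ _) (A_sym esym V 1); by field.
Qed.

Lemma edeg2 (V : {set T}) x y : x != y -> edeg e V [set x; y] = d V x + d V y - 2.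
Proof. by move=> xy; rewrite /edeg sum_set2. Qed.

Lemma neq_sum (V : {set T}) x (g : T -> T -> rat) :
  \sum_(y in V) \sum_(z in V) a x y * a x z * (y != z)%:R * g y z =
  \sum_(y in V) \sum_(z in V) a x y * a x z * g y z - \sum_(y in V) a x y * g y y.
Proof.
rewrite -sumrB; apply: eq_bigr => y yV.
rewrite (bigD1 y yV) [X in _ = X - _](bigD1 y yV) /= eqxx /= mulr0 mul0r add0r.
rewrite aa addrAC subrr add0r; apply: eq_bigr => z /andP [_ zy].
by rewrite eq_sym zy mulr1.
Qed.

Lemma sum_quad (V : {set T}) x (c0 c1 c2 : rat) :
  \sum_(y in V) a x y * (c0 + c1 * d V y + c2 * d V y ^+ 2) = c0 * d V x + c1 * Tn e V 1 x + c2 * Tn e V 2 x.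
Proof. rewrite /Tn degRE !mulr_sumr -!big_split /=; apply: eq_bigr => y _; ring. Qed.

Lemma EM2_A (V : {set T}) : EM2 e V = 2^-1 * (A e V 3 0 - 5 * A e V 2 0 + 8 * A e V 1 0 - 4 * A e V 0 0
   + 2 * A e V 2 1 - 6 * A e V 1 1 + 4 * A e V 0 1 + Q e V - A e V 0 2).
Proof.
rewrite /EM2 adj_sum //; congr (_ * _).
have -> : \sum_(x in V) \sum_(y in V) \sum_(z in V)
    a x y * a x z * (y != z)%:R * (\prod_(E in hP ((x, y), z)) edeg e V E) =
  \sum_(x in V) \sum_(y in V) \sum_(z in V) a x y * a x z * (y != z)%:R * ((d V x + d V y - 2) * (d V x + d V z - 2)).
  apply: eq_bigr => x _; apply: eq_bigr => y _; apply: eq_bigr => z _.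
  rewrite /adj; case exy: (e x y); case exz: (e x z); case yz: (y != z); rewrite ?mulr0 ?mul0r //=.
  have xy := neq_e eirr exy; have xz := neq_e eirr exz.
  by rewrite /hP /= (@prod_set2 _ (edeg e V)) ?pair_ne // !edeg2.
have -> : \sum_(x in V) \sum_(y in V) \sum_(z in V) a x y * a x z * (y != z)%:R * ((d V x + d V y - 2) * (d V x + d V z - 2)) =
  Sig V (fun x => (d V x * (d V x - 2) + Tn e V 1 x) ^+ 2 - ((d V x - 2) ^+ 2 * d V x + 2 * (d V x - 2) * Tn e V 1 x + Tn e V 2 x)).
  apply: eq_bigr => x _; rewrite neq_sum.
  have -> : \sum_(y in V) \sum_(z in V) a x y * a x z * ((d V x + d V y - 2) * (d V x + d V z - 2)) =
     (\sum_(y in V) a x y * ((d V x - 2) + 1 * d V y + 0 * d V y ^+ 2)) ^+ 2.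
    rewrite expr2 mulr_suml; apply: eq_bigr => y _; rewrite mulr_sumr; apply: eq_bigr => z _; ring.
  have -> : \sum_(y in V) a x y * ((d V x + d V y - 2) * (d V x + d V y - 2)) =
     \sum_(y in V) a x y * ((d V x - 2) ^+ 2 + (2 * (d V x - 2)) * d V y + 1 * d V y ^+ 2).
    by apply: eq_bigr => y _; congr (_ * _); ring.
  rewrite !sum_quad; ring.
have -> : Sig V (fun x => (d V x * (d V x - 2) + Tn e V 1 x) ^+ 2 - ((d V x - 2) ^+ 2 * d V x + 2 * (d V x - 2) * Tn e V 1 x + Tn e V 2 x)) =
  Sig V (fun x => 1 * d V x ^+ 4 + (-5) * d V x ^+ 3 + 8 * d V x ^+ 2 + (-4) * d V x ^+ 1
     + 2 * (d V x ^+ 2 * Tn e V 1 x) + (-6) * (d V x ^+ 1 * Tn e V 1 x) + 4 * (d V x ^+ 0 * Tn e V 1 x)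
     + 1 * Tn e V 1 x ^+ 2 + (-1) * Tn e V 2 x).
  by apply: eq_bigr => x _; ring.
rewrite !Sig_add !Sig_scale !Sig_pow !Sig_T Sig_Q Sig_T2 ?Sig_T1; ring.
Qed.

Lemma dsum_split (V : {set T}) x (D K : rat) :
  \sum_(y in V) \sum_(z in V) a x y * a x z * (D * ((K + d V y - 2) + (K + d V z - 2))) =
  2 * D * d V x * \sum_(y in V) a x y * (K + d V y - 2).
Proof.
rewrite (eq_bigr (fun y => (a x y * (K + d V y - 2)) * (D * d V x) + a x y * (D * \sum_(z in V) a x z * (K + d V z - 2)))); last first.
  move=> y _; rewrite [degR e V x]degRE !mulr_sumr -big_split /=; apply: eq_bigr => z _; ring.
rewrite big_split /= -!mulr_suml -degRE; ring.
Qed.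

Lemma beta_A (V : {set T}) : betaidx e V = A e V 3 0 - 3 * A e V 2 0 + 2 * A e V 1 0 + A e V 2 1 - A e V 1 1.
Proof.
rewrite /betaidx adj_sum //.
have -> : \sum_(x in V) \sum_(y in V) \sum_(z in V)
    a x y * a x z * (y != z)%:R * ((\sum_(w in \bigcap_(E in hP ((x, y), z)) E) d V w) * (\sum_(E in hP ((x, y), z)) edeg e V E)) =
  \sum_(x in V) \sum_(y in V) \sum_(z in V) a x y * a x z * (y != z)%:R * (d V x * ((d V x + d V y - 2) + (d V x + d V z - 2))).
  apply: eq_bigr => x _; apply: eq_bigr => y _; apply: eq_bigr => z _.
  rewrite /adj; case exy: (e x y); case exz: (e x z); case yz: (y != z); rewrite ?mulr0 ?mul0r //=.
  have xy := neq_e eirr exy; have xz := neq_e eirr exz.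
  rewrite /hP /= (@sum_set2 _ (edeg e V)) ?pair_ne // !edeg2 //.
  have -> : \bigcap_(E in [set [set x; y]; [set x; z]]) E = [set x].
    rewrite big_setU1 /= ?big_set1; last by rewrite inE pair_ne.
    apply/setP => w; rewrite !inE; case: (w =P x) => [-> //|wx] /=.
    by case: (w =P y) => [->|//]; rewrite (negbTE yz).
  by rewrite big_set1.
have -> : \sum_(x in V) \sum_(y in V) \sum_(z in V) a x y * a x z * (y != z)%:R * (d V x * ((d V x + d V y - 2) + (d V x + d V z - 2))) =
  2 * Sig V (fun x => 1 * d V x ^+ 4 + (-3) * d V x ^+ 3 + 2 * d V x ^+ 2 + 1 * (d V x ^+ 2 * Tn e V 1 x) + (-1) * (d V x ^+ 1 * Tn e V 1 x)).
  rewrite /Sig mulr_sumr; apply: eq_bigr => x _; rewrite neq_sum dsum_split.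
  have -> : \sum_(y in V) a x y * (d V x * ((d V x + d V y - 2) + (d V x + d V y - 2))) =
     2 * d V x * \sum_(y in V) a x y * ((d V x - 2) + 1 * d V y + 0 * d V y ^+ 2).
    by rewrite mulr_sumr; apply: eq_bigr => y _; ring.
  have -> : \sum_(y in V) a x y * (d V x + d V y - 2) = \sum_(y in V) a x y * ((d V x - 2) + 1 * d V y + 0 * d V y ^+ 2).
    by apply: eq_bigr => y _; congr (_ * _); ring.
  rewrite !sum_quad; ring.
rewrite !Sig_add !Sig_scale !Sig_pow !Sig_T; by field.
Qed.
End Links.


Section Levels.
Variables (T : finType) (e : rel T).
Hypothesis esym : symmetric e.
Hypothesis eirr : irreflexive e.
Hypothesis tri : forall x u v, e u v -> e x u -> e x v -> False.
Hypothesis sq : forall u v x y, e u v -> e u x -> e x y -> e y v -> x != v -> y != u -> False.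

Lemma PhiA (V : {set T}) i j : Phi e V (fun u v => degR e V u ^+ i * degR e V v ^+ j) = A e V i j.
Proof. by []. Qed.

Lemma PhiSD (V : {set T}) : Phi e V (fun u v => Tn e V 1 u * degR e V v) = Q e V.
Proof. by []. Qed.

Lemma Phi_scale0 (V : {set T}) (c : rat) :
  Phi e V (fun u v => c * (degR e V u ^+ 0 * degR e V v ^+ 0)) = c * A e V 0 0.
Proof. by rewrite Phi_scale. Qed.

Lemma nm_rec (V : {set T}) k : (k.+1)%:R * (nmatch e V k.+1)%:R =
  \sum_(E in edges e V) (nmatch e (V :\: E) k)%:R :> rat.
Proof. by rewrite -natrM nmatch_rec // natr_sum. Qed.

Lemma nm0 (V : {set T}) : nmatch e V 0 = 1%N.
Proof.
rewrite nmatchE -(cards1 (set0 : {set {set T}})); apply: eq_card => M; rewrite !inE.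
apply/and3P/eqP => [[_ /eqP /cards0_eq //]|->]; split; rewrite ?cards0 ?sub0set //.
by apply/trivIsetP => A B; rewrite inE.
Qed.

Lemma nm1 (V : {set T}) : (nmatch e V 1)%:R = mm e V.
Proof.
have := nm_rec V 0; rewrite mul1r => ->; rewrite (eq_bigr (fun _ => 1)); last by move=> E _; rewrite nm0.
by rewrite sumr_const.
Qed.

Lemma level (V : {set T}) k (F : {set T} -> rat) (H : T -> T -> rat) :
  (forall W, (nmatch e W k)%:R = F W) ->
  (forall u v, u \in V -> v \in V -> e u v -> 2 * F (V :\: [set u; v]) = H u v + H v u) ->
  (k.+1)%:R * (nmatch e V k.+1)%:R = 2^-1 * Phi e V H.
Proof.
move=> hF hH; rewrite nm_rec (eq_bigr (fun E => F (V :\: E))); last by move=> E _; rewrite hF.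
exact: (edge_sum_sym esym eirr (F := fun E => F (V :\: E))).
Qed.

Definition hsum (s : seq (rat * (T -> T -> rat))) (u v : T) : rat := \sum_(t <- s) t.1 * t.2 u v.

Lemma Phi_hsum (V : {set T}) s : Phi e V (hsum s) = \sum_(t <- s) t.1 * Phi e V t.2.
Proof.
elim: s => [|t s IH].
  by rewrite big_nil /Phi big1 // => u _; rewrite big1 // => v _; rewrite /hsum big_nil mulr0.
rewrite big_cons -IH -Phi_scale -Phi_add /Phi; apply: eq_bigr => u _; apply: eq_bigr => v _.
by rewrite /hsum big_cons.
Qed.

Definition H2 (V : {set T}) : T -> T -> rat := hsum [:: (((1) + (1)*(mm e V)), fun u v => (degR e V u ^+ 0 * degR e V v ^+ 0)); (((-2)), fun u v => (degR e V u ^+ 1 * degR e V v ^+ 0))].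

Definition H3 (V : {set T}) : T -> T -> rat := hsum [:: (((2) + (-1 / 2)*(M1pow e V 2) + (3 / 2)*(mm e V) + (1 / 2)*(mm e V) ^+ 2), fun u v => (degR e V u ^+ 0 * degR e V v ^+ 0)); (((-6) + (-2)*(mm e V)), fun u v => (degR e V u ^+ 1 * degR e V v ^+ 0)); (((2)), fun u v => (degR e V u ^+ 2 * degR e V v ^+ 0)); (((1)), fun u v => (degR e V u ^+ 1 * degR e V v ^+ 1)); (((2)), fun u v => (Tn e V 1 u))].

Definition H4 (V : {set T}) : T -> T -> rat := hsum [:: (((5) + (1 / 2)*(A e V 1 1) + (-3 / 2)*(M1pow e V 2) + (-1 / 2)*(M1pow e V 2)*(mm e V) + (1 / 3)*(M1pow e V 3) + (19 / 6)*(mm e V) + (1)*(mm e V) ^+ 2 + (1 / 6)*(mm e V) ^+ 3), fun u v => (degR e V u ^+ 0 * degR e V v ^+ 0)); (((-20) + (1)*(M1pow e V 2) + (-7)*(mm e V) + (-1)*(mm e V) ^+ 2), fun u v => (degR e V u ^+ 1 * degR e V v ^+ 0)); (((12) + (2)*(mm e V)), fun u v => (degR e V u ^+ 2 * degR e V v ^+ 0)); (((6) + (1)*(mm e V)), fun u v => (degR e V u ^+ 1 * degR e V v ^+ 1)); (((-2)), fun u v => (degR e V u ^+ 3 * degR e V v ^+ 0)); (((-2)), fun u v => (degR e V u ^+ 2 * degR e V v ^+ 1)); (((10) + (2)*(mm e V)), fun u v => (Tn e V 1 u)); (((-4)), fun u v => (degR e V u * Tn e V 1 u)); (((-2)), fun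 u v => (Tn e V 1 u * degR e V v)); (((-2)), fun u v => (U e V u)); (((-2)), fun u v => (Tn e V 2 u))].

Definition H5 (V : {set T}) : T -> T -> rat := hsum [:: (((-29 / 3) + (-1)*(A e V 1 1) + (9 / 4)*(M1pow e V 2) + (-5 / 4)*(M1pow e V 2)*(mm e V) + (-3 / 2)*(M1pow e V 3) + (1 / 4)*(M1pow e V 4) + (9 / 4)*(mm e V) + (43 / 24)*(mm e V) ^+ 2 + (5 / 12)*(mm e V) ^+ 3 + (1 / 24)*(mm e V) ^+ 4), fun u v => (degR e V u ^+ 0 * degR e V v ^+ 0)); (((55 / 2) + (5 / 2)*(M1pow e V 2) + (-44 / 3)*(mm e V) + (-5 / 2)*(mm e V) ^+ 2 + (-1 / 3)*(mm e V) ^+ 3), fun u v => (degR e V u ^+ 1 * degR e V v ^+ 0)); (((-113 / 12) + (5)*(mm e V) + (1 / 2)*(mm e V) ^+ 2), fun u v => (degR e V u ^+ 2 * degR e V v ^+ 0)); (((109 / 12) + (5 / 2)*(mm e V) + (1 / 2)*(mm e V) ^+ 2), fun u v => (degR e V u ^+ 1 * degR e V v ^+ 1)); (((5 / 3) + (-1 / 3)*(mm e V)), fun u v => (degR e V u ^+ 3 * degR e V v ^+ 0)); (((-5) + (-1)*(mm e V)), fun u v => (degR e V u ^+ 2 * degR e V v ^+ 1)); (((-5 / 12)), fun u v => (degR e V u ^+ 4 * degR e V v ^+ 0)); (((1 / 3)), fun u v => (degR e V u ^+ 3 * degR e V v ^+ 1)); (((1 / 4)), fun u v => (degR e V u ^+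 2 * degR e V v ^+ 2)); (((-24) + (5)*(mm e V)), fun u v => (Tn e V 1 u)); (((-1)), fun u v => (degR e V u * Tn e V 1 u)); (((-5)), fun u v => (Tn e V 1 u * degR e V v)); (((4)), fun u v => (U e V u)); (((12)), fun u v => (Tn e V 2 u)); (((-2)), fun u v => (Tn e V 3 u))].

Definition p2f (V : {set T}) : rat := 2^-1 * (mm e V ^+ 2 + mm e V - M1pow e V 2).
Definition p3f (V : {set T}) : rat := 6^-1 * mm e V ^+ 3 + 2^-1 * mm e V ^+ 2 + 2 / 3 * mm e V
  - 2^-1 * mm e V * M1pow e V 2 - M1pow e V 2 + M2 e V + 3^-1 * M1pow e V 3.
Definition p4L (V : {set T}) : rat := 24^-1 * mm e V ^+ 4 + 4^-1 * mm e V ^+ 3 + 19 / 24 * mm e V ^+ 2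
  - 11 / 4 * mm e V - 5 / 4 * mm e V * M1pow e V 2 + 7 / 2 * M1pow e V 2 - 2 * M2 e V
  - 3 / 2 * M1pow e V 3 + 4^-1 * M1pow e V 4.
Definition p4N (V : {set T}) : rat := - EM2 e V + 8^-1 * M1pow e V 2 ^+ 2 + 3^-1 * mm e V * M1pow e V 3
  - 4^-1 * mm e V ^+ 2 * M1pow e V 2 + mm e V * M2 e V.

Ltac atoms V :=
  rewrite ?(mm_A esym eirr) ?P_A ?(M2_A esym eirr) ?(EM2_A esym eirr) ?(A_sym esym V 1 2) ?(A_sym esym V 1 3)
          ?(A_sym esym V 0 1) ?(A_sym esym V 0 2).

Ltac split_phi h := rewrite Phi_hsum !big_cons !big_nil /= ?PhiA ?PhiT ?PhiDS ?PhiSD ?(PhiU esym) in h.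

Lemma p2_ok (V : {set T}) : (nmatch e V 2)%:R = p2f V.
Proof.
have h := level (V := V) (F := fun W => mm e W) (H := H2 V) nm1.
have {}h : (1.+1)%:R * (nmatch e V 1.+1)%:R = 2^-1 * Phi e V (H2 V).
  apply: h => u v uV vV euv; rewrite /H2 /hsum !big_cons !big_nil /= (mm_loc esym eirr uV vV euv); by field.
rewrite /H2 in h; split_phi h; rewrite /p2f.
have -> : (nmatch e V 2)%:R = 2^-1 * ((1.+1)%:R * (nmatch e V 1.+1)%:R) :> rat by field.
rewrite h; atoms V; by field.
Qed.

Lemma p3_ok (V : {set T}) : (nmatch e V 3)%:R = p3f V.
Proof.
have h := level (V := V) (F := p2f) (H := H3 V) p2_ok.
have {}h : (2.+1)%:R * (nmatch e V 2.+1)%:R = 2^-1 * Phi e V (H3 V).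
  apply: h => u v uV vV euv.
  rewrite /p2f /H3 /hsum !big_cons !big_nil /= (mm_loc esym eirr uV vV euv) (P2_loc esym eirr tri uV vV euv); by field.
rewrite /H3 in h; split_phi h; rewrite /p3f.
have -> : (nmatch e V 3)%:R = 3^-1 * ((2.+1)%:R * (nmatch e V 2.+1)%:R) :> rat by field.
rewrite h; atoms V; by field.
Qed.

Lemma p4_ok (V : {set T}) : (nmatch e V 4)%:R = p4L V + p4N V.
Proof.
have h := level (V := V) (F := p3f) (H := H4 V) p3_ok.
have {}h : (3.+1)%:R * (nmatch e V 3.+1)%:R = 2^-1 * Phi e V (H4 V).
  apply: h => u v uV vV euv.
  rewrite /p3f /H4 /hsum !big_cons !big_nil /= (mm_loc esym eirr uV vV euv) (P2_loc esym eirr tri uV vV euv).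
  rewrite (P3_loc esym eirr tri uV vV euv) (M2_loc esym eirr tri sq uV vV euv); by field.
rewrite /H4 in h; split_phi h; rewrite /p4L /p4N.
have -> : (nmatch e V 4)%:R = 4^-1 * ((3.+1)%:R * (nmatch e V 3.+1)%:R) :> rat by field.
rewrite h; atoms V; by field.
Qed.
End Levels.


Lemma girth_tri (T : finType) (e : rel T) : symmetric e -> irreflexive e -> girth_ge5 e ->
  forall x u v, e u v -> e x u -> e x v -> False.
Proof.
move=> esym eirr hg x u v euv exu exv.
have := hg [:: x; u; v] isT; rewrite /= !inE !negb_or.
rewrite (neq_e eirr exu) (neq_e eirr exv) (neq_e eirr euv) exu euv esym exv.
by move=> /(_ isT isT).
Qed.

Lemma girth_sq (T : finType) (e : rel T) : symmetric e -> irreflexive e -> girth_ge5 e ->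
  forall u v x y, e u v -> e u x -> e x y -> e y v -> x != v -> y != u -> False.
Proof.
move=> esym eirr hg u v x y euv eux exy eyv xv yu.
have := hg [:: u; x; y; v] isT; rewrite /= !inE !negb_or.
rewrite (neq_e eirr eux) (neq_e eirr euv) (neq_e eirr exy) (neq_e eirr eyv) xv eq_sym yu.
by rewrite eux exy eyv esym euv => /(_ isT isT).
Qed.

Theorem theorem2p10 (T : finType) (e : rel T) :
  simple_graph e -> girth_ge5 e ->
  let G := [set: T] in
  let m : rat := (nedges e G)%:R in
  let Guv (E : {set T}) := ~: E in
  let mG (E : {set T}) : rat := (nedges e (Guv E))%:R in
  (nmatch e G 5)%:R = 5^-1 * (
      24^-1 * m * (m ^+ 4 + 10 * m ^+ 3 + 43 * m ^+ 2 + 54 * m - 328)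
    + 5 / 4 * (M1 e G) ^+ 2
    - 2^-1 * alpha_l e G 1 * (m - 7)
    - 5 / 6 * alpha_l e G 2
    - 12^-1 * M1 e G * (2 * m ^+ 3 + 30 * m ^+ 2 + 61 * m - 225)
    + 2^-1 * betaidx e G
    + 12^-1 * M2 e G * (6 * m ^+ 2 + 66 * m - 239)
    + 24^-1 * Fidx e G * (6 * m ^+ 2 + 24 * m - 149)
    + 12^-1 * M1pow e G 4 * (m + 10)
    + 4^-1 * M22 e G
    - EM2 e G
    - 5 / 24 * M1pow e G 5
    + 8^-1 * (\sum_(E in edges e G) (M1 e (Guv E)) ^+ 2)
    + 3^-1 * (\sum_(E in edges e G) mG E * Fidx e (Guv E))
    - 4^-1 * (\sum_(E in edges e G) mG E ^+ 2 * M1 e (Guv E))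
    - (\sum_(E in edges e G) EM2 e (Guv E))
    + (\sum_(E in edges e G) mG E * M2 e (Guv E))).
Proof.
case=> esym eirr hg.
have tri := girth_tri esym eirr hg; have sq := girth_sq esym eirr hg.
move=> G m Guv mG; rewrite /m /mG /Guv /G /M1 /Fidx.
set V := [set: T].
have h5 : 5%:R * (nmatch e V 5)%:R = 2^-1 * Phi e V (H5 e V) + \sum_(E in edges e V) p4N e (V :\: E).
  rewrite (nm_rec e V 4) (eq_bigr (fun E => p4L e (V :\: E) + p4N e (V :\: E))); last first.
    by move=> E _; rewrite (p4_ok esym eirr tri sq).
  rewrite big_split /=; congr (_ + _).
  apply: (edge_sum_sym esym eirr (F := fun E => p4L e (V :\: E))) => u v uV vV euv.
  rewrite /p4L /H5 /hsum !big_cons !big_nil /= (mm_loc esym eirr uV vV euv) (P2_loc esym eirr tri uV vV euv).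
  rewrite (P3_loc esym eirr tri uV vV euv) (P4_loc esym eirr tri uV vV euv) (M2_loc esym eirr tri sq uV vV euv).
  by field.
have hN : \sum_(E in edges e V) p4N e (V :\: E) =
    - (\sum_(E in edges e V) EM2 e (~: E))
    + 8^-1 * (\sum_(E in edges e V) M1pow e (~: E) 2 ^+ 2)
    + 3^-1 * (\sum_(E in edges e V) (nedges e (~: E))%:R * M1pow e (~: E) 3)
    - 4^-1 * (\sum_(E in edges e V) (nedges e (~: E))%:R ^+ 2 * M1pow e (~: E) 2)
    + (\sum_(E in edges e V) (nedges e (~: E))%:R * M2 e (~: E)).
  rewrite !mulr_sumr -!sumrN -!big_split /=; apply: eq_bigr => E _.
  by rewrite /p4N /V setTD /mm; ring.
rewrite /H5 in h5; rewrite Phi_hsum !big_cons big_nil /= ?PhiA ?PhiT ?PhiDS ?PhiSD ?(PhiU esym) in h5.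
have -> : (nmatch e V 5)%:R = 5^-1 * (5%:R * (nmatch e V 5)%:R) :> rat by field.
rewrite h5 hN -/(mm e V).
rewrite ?(mm_A esym eirr) ?P_A ?(M2_A esym eirr) ?(EM2_A esym eirr) ?(alpha_A esym eirr) ?(beta_A esym eirr)
   ?(M22_A esym eirr) ?(A_sym esym V 1 2) ?(A_sym esym V 1 3) ?(A_sym esym V 0 1) ?(A_sym esym V 0 2).
by field.
Qed.
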